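(* Let $\omega=e^{2\pi i/3}$, $\Delta=\mathrm{diag}(1,0,-1)$, and \[ g(\lambda)=\frac{i}{\sqrt3}\,\lambda^{\Delta/3}\begin{pmatrix}1&\omega&\omega^2\\1&1&1\\1&\omega^2&\omega\end{pmatrix}. \] Then $\det g(\lambda)=1$, and if $\Psi$ satisfies $\partial_\lambda\Psi=L(\lambda;t_5,t_2,x)\Psi$ (with $L$ as in the context) and we set $\Psi=g\Phi$ and $\lambda=\xi^3$, then $\Phi=\Phi(\xi;t_5,t_2,x)$ satisfies $\partial_\xi\Phi=\mathcal L(\xi;t_5,t_2,x)\Phi$, where \[ \mathcal L(\xi)=3\begin{pmatrix}1&0&0\\0&\omega&0\\0&0&\omega^2\end{pmatrix}\xi^6+\sum_{k=0}^4\mathcal L_k\xi^k+\frac1\xi\cdot\frac{i}{\sqrt3}\begin{pmatrix}0&-1&1\\1&0&-1\\-1&1&0\end{pmatrix} \] for some matrices $\mathcal L_k$ independent of $\xi$.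
   Context: $E_{ij}$ are $3\times3$ matrix units and $Q_U,Q_V,Q_W,P_U,P_V,P_W,t_5,t_2,x$ are parameters. $L(\lambda)=E_{13}\lambda^2+\begin{pmatrix}0&2t_5+\frac14Q_U&-Q_V\\1&0&2t_5+\frac14Q_U\\0&1&0\end{pmatrix}\lambda+L_0$, where $L_0$ has rows $(\tfrac18Q_U^2-P_W+\tfrac12P_V-\tfrac14t_5Q_U-\tfrac16t_5^2,L_{12},L_{13})$, $(\tfrac12Q_V-\tfrac14Q_W,2P_W-\tfrac14Q_U^2+\tfrac12t_5Q_U+\tfrac13t_5^2,L_{23})$, $(t_5-\tfrac12Q_U,\tfrac12Q_V+\tfrac14Q_W,\tfrac18Q_U^2-P_W-\tfrac12P_V-\tfrac14t_5Q_U-\tfrac16t_5^2)$, with $L_{12}=\tfrac5{16}Q_UQ_W-P_U+\tfrac14t_5Q_W-\tfrac38Q_UQ_V-\tfrac12t_5Q_V+t_2$, $L_{13}=\tfrac1{16}Q_W^2+\tfrac7{32}Q_U^3+\tfrac34Q_V^2-\tfrac32P_WQ_U+\tfrac5{16}t_5Q_U^2-2t_5P_W+\tfrac14t_5^2Q_U+x+\tfrac8{27}t_5^3$, $L_{23}=-\tfrac5{16}Q_UQ_W+P_U-\tfrac14t_5Q_W-\tfrac38Q_UQ_V-\tfrac12t_5Q_V+t_2$. $\lambda^{\Delta/3}=\exp(\frac\Delta3\log\lambda)$. *)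

(* Defs.v *)
From mathcomp Require Import all_boot all_order all_algebra.
From mathcomp Require Import all_classical all_reals all_analysis.
From mathcomp Require Export complex.
Import GRing.Theory Num.Theory numFieldNormedType.Exports.

Set Implicit Arguments.
Unset Strict Implicit.
Unset Printing Implicit Defensive.

Local Open Scope ring_scope.
Local Open Scope complex_scope.

(* The complex numbers over a real type R, seen as a numClosedFieldType
   (hence a normed module over itself, so complex derivatives make sense). *)
Definition CC (R : realType) : numClosedFieldType := R[i].

Section Defs.
Variable R : realType.
Local Notation C := (CC R).

Definition mx3 (a b c d e f g h k : C) : 'M[C]_3 :=
  \matrix_(i < 3, j < 3)
    nth 0 (nth [::] [:: [:: a; b; c]; [:: d; e; f]; [:: g; h; k]] i) j.

Definition omega : C := (cos (2 * pi / 3 : R)) +i* (sin (2 * pi / 3 : R)).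

Definition sqrt3 : C := sqrtC (3 : C).

Definition Delta : 'M[C]_3 := \matrix_(i < 3, j < 3)
  (if i == j then ((1 - (i : nat)%:Z)%:~R : C) else 0).

(* lambda^{Delta/3} evaluated at lambda = xi^3, with xi = lambda^{1/3}
   the (principal) cube root: xi^Delta = diag(xi, 1, xi^{-1}). *)
Definition xi_pow_Delta (xi : C) : 'M[C]_3 := \matrix_(i < 3, j < 3)
  (if i == j then xi ^ (1 - (i : nat)%:Z) else 0).

Definition Cmat : 'M[C]_3 :=
  mx3 1 omega (omega ^+ 2)
      1 1 1
      1 (omega ^+ 2) omega.

Definition gauge (xi : C) : 'M[C]_3 := ('i / sqrt3) *: (xi_pow_Delta xi *m Cmat).

Definition E13 : 'M[C]_3 := mx3 0 0 1 0 0 0 0 0 0.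

Section Lax.
Variables (QU QV QW PU PV PW t5 t2 x : C).

Definition L1 : 'M[C]_3 :=
  mx3 0 (2 * t5 + QU / 4) (- QV)
      1 0 (2 * t5 + QU / 4)
      0 1 0.

Definition L12 : C :=
  5/16 * QU * QW - PU + 1/4 * t5 * QW - 3/8 * QU * QV - 1/2 * t5 * QV + t2.
Definition L13 : C :=
  1/16 * QW ^+ 2 + 7/32 * QU ^+ 3 + 3/4 * QV ^+ 2 - 3/2 * PW * QU
  + 5/16 * t5 * QU ^+ 2 - 2 * t5 * PW + 1/4 * t5 ^+ 2 * QU + x
  + 8/27 * t5 ^+ 3.
Definition L23 : C :=
  - (5/16) * QU * QW + PU - 1/4 * t5 * QW - 3/8 * QU * QV - 1/2 * t5 * QV + t2.

Definition L0 : 'M[C]_3 :=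
  mx3 (1/8 * QU ^+ 2 - PW + 1/2 * PV - 1/4 * t5 * QU - 1/6 * t5 ^+ 2) L12 L13
      (1/2 * QV - 1/4 * QW) (2 * PW - 1/4 * QU ^+ 2 + 1/2 * t5 * QU + 1/3 * t5 ^+ 2) L23
      (t5 - 1/2 * QU) (1/2 * QV + 1/4 * QW)
        (1/8 * QU ^+ 2 - PW - 1/2 * PV - 1/4 * t5 * QU - 1/6 * t5 ^+ 2).

Definition Lmat (lam : C) : 'M[C]_3 := lam ^+ 2 *: E13 + lam *: L1 + L0.

End Lax.

Definition calL6 : 'M[C]_3 := 3 *: mx3 1 0 0 0 omega 0 0 0 (omega ^+ 2).
Definition calLres : 'M[C]_3 := ('i / sqrt3) *: mx3 0 (-1) 1 1 0 (-1) (-1) 1 0.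

Definition calL (Lk : 'I_5 -> 'M[C]_3) (xi : C) : 'M[C]_3 :=
  xi ^+ 6 *: calL6 + \sum_(k < 5) xi ^+ k *: Lk k + xi^-1 *: calLres.

End Defs.

(* Main.v *)
Require Import Defs.
From mathcomp Require Import all_boot all_order all_algebra.
From mathcomp Require Import all_classical all_reals all_analysis.
From mathcomp Require Import complex.
From mathcomp Require Import ring lra.
Import Order.TTheory GRing.Theory Num.Theory numFieldNormedType.Exports.
Local Open Scope ring_scope.

Section Trig.
Variable R : realType.
Let y : R := 2 * pi / 3.

Lemma cos_y : cos y = - (1/2).
Proof.
have h3 : cos (y + y + y) = 1.
  have -> : y + y + y = pi *+ 2 by rewrite /y; field.
  exact: cos2pi.
rewrite !cosD !sinD in h3.
have hs := sin2cos2 y.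
move: h3 hs; move: (sin y) => s h3 hs.
have e : (cos y - 1) * (2 * cos y + 1) ^+ 2 = 0.
  move: h3 hs; move: (cos y) => c h3 hs.
  have -> : (c - 1) * (2 * c + 1) ^+ 2 = (c * c - s * s) * c - (s * c + c * s) * s - 1 + 3 * c * (s ^+ 2 - (1 - c ^+ 2)) by ring.
  by rewrite h3 hs; ring.
set c := cos y in e *.
have c1 : c != 1.
  apply/eqP => hc.
  have : y = 0.
    apply: cos_inj; rewrite ?cos0 //.
    - rewrite in_itv /= /y; apply/andP; split.
        by apply: divr_ge0; [apply: mulr_ge0 => //; apply: ltW; apply: pi_gt0|].
      have := pi_gt0 R; lra.
    - by rewrite in_itv /= lexx; apply: ltW; apply: pi_gt0.
  rewrite /y => h; have := pi_gt0 R; lra.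
move/eqP: e; rewrite mulf_eq0 subr_eq0 (negbTE c1) /= expf_eq0 /= => /eqP e.
have -> : c = ((2 * c + 1) - 1) / 2 by field.
by rewrite e; field.
Qed.

Lemma sin_y_gt0 : 0 < sin y.
Proof. apply: sin_gt0_pi; rewrite /y; have := pi_gt0 R; lra. Qed.

Lemma sin_y2 : sin y ^+ 2 = 3 / 4.
Proof. by rewrite sin2cos2 cos_y; field. Qed.
End Trig.

Section Cx.
Local Open Scope complex_scope.
Variable R : realType.
Local Notation C := (CC R).

Lemma imagE : (Num.imaginary : C) = ('i%C : R[i]).
Proof. reflexivity. Qed.

Lemma sqrt3E : sqrt3 R = ((2 * sin (2 * pi / 3 : R))%:C : R[i]).
Proof.
apply/eqP; rewrite -(@eqrXn2 _ 2) //.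
- rewrite /sqrt3 sqrtCK -rmorphXn /= exprMn sin_y2.
  apply/eqP; have -> : (2:R) ^+ 2 * (3 / 4) = 3%:R by field.
  by rewrite rmorph_nat.
- by rewrite sqrtC_ge0 ler0n.
- rewrite (_ : 0 = 0%:C) // lecR; apply: mulr_ge0 => //; exact/ltW/sin_y_gt0.
Qed.
End Cx.
Section Cx2.
Local Open Scope complex_scope.
Variable R : realType.
Local Notation C := (CC R).
Lemma omegaE : omega R = (-1 + Num.imaginary * sqrt3 R) / 2 :> C.
Proof.
rewrite sqrt3E imagE /omega [LHS]complexE /= cos_y.
rewrite rmorphM rmorphN /= rmorph_nat. 
have -> : ((1 / 2 : R)%:C) = 1 / 2 :> R[i].
  by rewrite rmorphM /= rmorph1 fmorphV /= rmorph_nat.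
by field.
Qed.

Lemma u2 : (Num.imaginary * sqrt3 R) ^+ 2 = -3 :> C.
Proof. by rewrite exprMn sqrCi sqrtCK mulN1r. Qed.
End Cx2.

Section Mx3.
Variable R : realType.
Local Notation C := (CC R).
Local Notation mx3 := (@mx3 R).

Lemma mx3_add a1 a2 a3 a4 a5 a6 a7 a8 a9 b1 b2 b3 b4 b5 b6 b7 b8 b9 :
  mx3 a1 a2 a3 a4 a5 a6 a7 a8 a9 + mx3 b1 b2 b3 b4 b5 b6 b7 b8 b9 =
  mx3 (a1 + b1) (a2 + b2) (a3 + b3) (a4 + b4) (a5 + b5) (a6 + b6) (a7 + b7) (a8 + b8) (a9 + b9).
Proof.
by apply/matrixP => i j; rewrite !mxE; case: i => [[|[|[|?]]] Hi] //; case: j => [[|[|[|?]]] Hj].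
Qed.

Lemma mx3_scale k a1 a2 a3 a4 a5 a6 a7 a8 a9 :
  k *: mx3 a1 a2 a3 a4 a5 a6 a7 a8 a9 =
  mx3 (k * a1) (k * a2) (k * a3) (k * a4) (k * a5) (k * a6) (k * a7) (k * a8) (k * a9).
Proof.
by apply/matrixP => i j; rewrite !mxE; case: i => [[|[|[|?]]] Hi] //; case: j => [[|[|[|?]]] Hj].
Qed.

Lemma mx3_opp a1 a2 a3 a4 a5 a6 a7 a8 a9 :
  - mx3 a1 a2 a3 a4 a5 a6 a7 a8 a9 =
  mx3 (- a1) (- a2) (- a3) (- a4) (- a5) (- a6) (- a7) (- a8) (- a9).
Proof.
by apply/matrixP => i j; rewrite !mxE; case: i => [[|[|[|?]]] Hi] //; case: j => [[|[|[|?]]] Hj].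
Qed.

Lemma mx3_mul a1 a2 a3 a4 a5 a6 a7 a8 a9 b1 b2 b3 b4 b5 b6 b7 b8 b9 :
  mx3 a1 a2 a3 a4 a5 a6 a7 a8 a9 *m mx3 b1 b2 b3 b4 b5 b6 b7 b8 b9 =
  mx3 (a1 * b1 + a2 * b4 + a3 * b7) (a1 * b2 + a2 * b5 + a3 * b8) (a1 * b3 + a2 * b6 + a3 * b9)
      (a4 * b1 + a5 * b4 + a6 * b7) (a4 * b2 + a5 * b5 + a6 * b8) (a4 * b3 + a5 * b6 + a6 * b9)
      (a7 * b1 + a8 * b4 + a9 * b7) (a7 * b2 + a8 * b5 + a9 * b8) (a7 * b3 + a8 * b6 + a9 * b9).
Proof.
apply/matrixP => i j; rewrite !mxE !big_ord_recl big_ord0 !mxE.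
by case: i => [[|[|[|?]]] Hi] //; case: j => [[|[|[|?]]] Hj] //=; rewrite addr0 !addrA.
Qed.

Lemma mx3_eta (A : 'M[C]_3) :
  A = mx3 (A 0 0) (A 0 1) (A 0 2) (A 1 0) (A 1 1) (A 1 2) (A 2 0) (A 2 1) (A 2 2).
Proof.
apply/matrixP => i j; rewrite !mxE.
case: i => [[|[|[|?]]] Hi] //; case: j => [[|[|[|?]]] Hj] //=; congr (A _ _); exact: val_inj.
Qed.

Lemma mx3_congr a1 a2 a3 a4 a5 a6 a7 a8 a9 b1 b2 b3 b4 b5 b6 b7 b8 b9 :
  a1 = b1 -> a2 = b2 -> a3 = b3 -> a4 = b4 -> a5 = b5 -> a6 = b6 -> a7 = b7 -> a8 = b8 -> a9 = b9 ->
  mx3 a1 a2 a3 a4 a5 a6 a7 a8 a9 = mx3 b1 b2 b3 b4 b5 b6 b7 b8 b9.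
Proof. by move=> -> -> -> -> -> -> -> -> ->. Qed.
End Mx3.

Lemma det3 (F : comNzRingType) (A : 'M[F]_3) : \det A =
  A 0 0 * (A 1 1 * A 2 2 - A 1 2 * A 2 1) - A 0 1 * (A 1 0 * A 2 2 - A 1 2 * A 2 0)
  + A 0 2 * (A 1 0 * A 2 1 - A 1 1 * A 2 0).
Proof.
pose a (n m : nat) := A (inord n) (inord m).
have hA : forall i j : 'I_3, A i j = a i j by move=> i j; rewrite /a !inord_val.
rewrite (expand_det_row _ ord0) !big_ord_recl big_ord0 /cofactor.
rewrite !(expand_det_row _ ord0) !big_ord_recl !big_ord0 /cofactor !det_mx11 !mxE.
rewrite !hA /=. rewrite /bump /=. ring.
Qed.

Section Alg.
Variable R : realType.
Local Notation C := (CC R).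
Local Notation w := (omega R).

Definition P3 : 'M[C]_3 := 3 *: mx3 0 0 1 1 0 0 0 1 0.

Lemma w2 : w ^+ 2 = - 1 - w.
Proof. rewrite omegaE. have := @u2 R. move: (Num.imaginary * _) => u h. by field: h. Qed.

Lemma F1 : Cmat R *m calL6 R = P3 *m Cmat R.
Proof.
apply/matrixP => i j; rewrite !mxE !big_ord_recl !big_ord0 !mxE.
have h := w2.
case: i => [[|[|[|?]]] Hi] //; case: j => [[|[|[|?]]] Hj] //=; ring: h.
Qed.

Lemma sqrt3_neq0 : sqrt3 R != 0.
Proof. by rewrite /sqrt3 sqrtC_eq0 pnatr_eq0. Qed.

Lemma hi : (Num.imaginary : C) ^+ 2 = -1.
Proof. exact: sqrCi. Qed.
Lemma hs : sqrt3 R ^+ 2 = 3.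
Proof. exact: sqrtCK. Qed.

Lemma F2 : Cmat R *m calLres R = - Delta R *m Cmat R.
Proof.
apply/matrixP => i j; rewrite !mxE !big_ord_recl !big_ord0 !mxE.
have h1 := hi; have h2 := hs; have h3 := sqrt3_neq0.
rewrite omegaE.
case: i => [[|[|[|?]]] Hi] //; case: j => [[|[|[|?]]] Hj] //=; field: h1 h2; exact: h3.
Qed.

Lemma XpE (xi : C) : xi_pow_Delta xi = mx3 xi 0 0 0 1 0 0 0 xi^-1.
Proof.
apply/matrixP => i j; rewrite !mxE.
by case: i => [[|[|[|?]]] Hi] //; case: j => [[|[|[|?]]] Hj].
Qed.

Lemma DeltaE : Delta R = mx3 1 0 0 0 0 0 0 0 (-1).
Proof.
apply/matrixP => i j; rewrite !mxE.
by case: i => [[|[|[|?]]] Hi] //; case: j => [[|[|[|?]]] Hj].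
Qed.

Lemma det_gauge (xi : C) : xi != 0 -> \det (gauge xi) = 1.
Proof.
move=> x0; rewrite /gauge XpE det3 !mxE !big_ord_recl !big_ord0 !mxE /=.
have h1 := hi; have h2 := hs; have h3 := sqrt3_neq0.
by rewrite omegaE; field: h1 h2; rewrite x0 h3.
Qed.
End Alg.

Section Alg2.
Variable R : realType.
Local Notation C := (CC R).
Variables (a b : C) (A0 : 'M[C]_3).
Definition A1 : 'M[C]_3 := mx3 0 a b 1 0 a 0 1 0.
Definition Lg (z : C) : 'M[C]_3 := z ^+ 2 *: E13 R + z *: A1 + A0.

Definition E1 : 'M[C]_3 := mx3 1 0 0 0 0 0 0 0 0.
Definition E2 : 'M[C]_3 := mx3 0 0 0 0 1 0 0 0 0.
Definition E3 : 'M[C]_3 := mx3 0 0 0 0 0 0 0 0 1.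
Definition Dn (z : C) := z^-1 *: E1 + E2 + z *: E3.
Definition Dp (z : C) := (- z ^- 2) *: E1 + E3.
Definition Nk (k : 'I_5) : 'M[C]_3 := \matrix_(i < 3, j < 3)
  (3 * (A0 i j * ((2 + i - j)%N == k)%:R + A1 i j * ((5 + i - j)%N == k)%:R)).
Definition Mm (z : C) := z ^+ 6 *: P3 R + \sum_(k < 5) z ^+ k *: Nk k + z^-1 *: (- Delta R).

Lemma SE (z : C) : \sum_(k < 5) z ^+ k *: Nk k =
  mx3 (3 * (A0 0 0 * z ^+ 2)) (3 * (A0 0 1 * z + a * z ^+ 4)) (3 * (A0 0 2 + b * z ^+ 3))
      (3 * (A0 1 0 * z ^+ 3)) (3 * (A0 1 1 * z ^+ 2)) (3 * (A0 1 2 * z + a * z ^+ 4))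
      (3 * (A0 2 0 * z ^+ 4)) (3 * (A0 2 1 * z ^+ 3)) (3 * (A0 2 2 * z ^+ 2)).
Proof.
rewrite [LHS]mx3_eta; apply: mx3_congr;
  rewrite summxE !big_ord_recl big_ord0 !mxE /=; ring.
Qed.

Lemma F6 (z : C) : z != 0 ->
  Dp z + (3 * z ^+ 2) *: (Dn z *m Lg (z ^+ 3)) = Mm z *m Dn z.
Proof.
move=> z0; rewrite /Lg {1}(@mx3_eta R A0) /Mm SE DeltaE /Dp /Dn /E1 /E2 /E3 /E13 /A1 /P3.
rewrite !(mx3_scale, mx3_add, mx3_opp, mx3_mul).
by apply: mx3_congr; field.
Qed.
End Alg2.

Section Alg3.
Variable R : realType.
Local Notation C := (CC R).

Lemma mx3_one : (1%:M : 'M[C]_3) = mx3 1 0 0 0 1 0 0 0 1.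
Proof.
by apply/matrixP => i j; rewrite !mxE; case: i => [[|[|[|?]]] Hi] //; case: j => [[|[|[|?]]] Hj].
Qed.

Lemma detC : \det (Cmat R) = 3 * (Num.imaginary * sqrt3 R).
Proof.
rewrite det3 !mxE /=.
have h1 := @hi R; have h2 := @hs R.
by rewrite omegaE; field: h1 h2.
Qed.

Lemma unitC : Cmat R \in unitmx.
Proof.
rewrite unitmxE detC unitfE; apply: mulf_neq0; first by rewrite pnatr_eq0.
apply: mulf_neq0; last exact: sqrt3_neq0.
by apply/eqP => h; have := @hi R; rewrite h expr0n /= => /eqP; rewrite eq_sym oppr_eq0 oner_eq0.
Qed.

Definition cc : C := Num.imaginary / sqrt3 R.
Definition Ci := invmx (Cmat R).
Definition Gi (z : C) := cc^-1 *: (Ci *m Dn R z).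

Lemma cc_neq0 : cc != 0.
Proof.
rewrite /cc; apply: mulf_neq0; last by rewrite invr_eq0 sqrt3_neq0.
by apply/eqP => h; have := @hi R; rewrite h expr0n /= => /eqP; rewrite eq_sym oppr_eq0 oner_eq0.
Qed.

Lemma invgauge (z : C) : z != 0 -> invmx (gauge z) = Gi z.
Proof.
move=> z0.
have H : gauge z *m Gi z = 1%:M.
  rewrite /gauge /Gi -scalemxAl -scalemxAr scalerA -/cc mulfV ?cc_neq0 // scale1r.
  rewrite -!mulmxA (mulmxA (Cmat R)) mulmxV ?unitC // mul1mx.
  rewrite XpE /Dn /E1 /E2 /E3 !(mx3_scale, mx3_add, mx3_mul) mx3_one.
  by apply: mx3_congr; field.
have [Hu _] := mulmx1_unit H.
by rewrite -[RHS]mul1mx -(mulVmx Hu) -mulmxA H mulmx1.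
Qed.
End Alg3.

Section Alg4.
Variable R : realType.
Local Notation C := (CC R).
Variables (a b : C) (A0 : 'M[C]_3).

Definition Lk (k : 'I_5) := Ci R *m Nk R a b A0 k *m Cmat R.

Lemma sc3 (A B D : 'M[C]_3) (s : C) : s *: (A *m (B *m D)) = A *m (s *: B) *m D.
Proof. by rewrite -scalemxAr -scalemxAl mulmxA. Qed.

Lemma calL_E (z : C) : calL Lk z = Ci R *m Mm R a b A0 z *m Cmat R.
Proof.
have e6 : calL6 R = Ci R *m (P3 R *m Cmat R) by rewrite -F1 mulKmx // unitC.
have er : calLres R = Ci R *m (- Delta R *m Cmat R) by rewrite -F2 mulKmx // unitC.
rewrite /calL e6 er /Mm !mulmxDr !mulmxDl mulmx_sumr mulmx_suml.
congr (_ + _ + _).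
- exact: sc3.
- by apply: eq_bigr => k _; rewrite /Lk -sc3 mulmxA.
- exact: sc3.
Qed.

Lemma calL_Gi (z : C) : calL Lk z *m Gi R z = (cc R)^-1 *: (Ci R *m (Mm R a b A0 z *m Dn R z)).
Proof.
rewrite calL_E /Gi -scalemxAr; congr (_ *: _).
by rewrite -!mulmxA (mulmxA (Cmat R)) mulmxV ?unitC // mul1mx.
Qed.
End Alg4.

Section Calc.
Local Open Scope classical_set_scope.
Variable R : realType.
Local Notation C := (CC R).

Lemma is_derive_cvg {W : normedModType C} (f : C -> W) (df : W) (x : C) :
  (fun h => h^-1 *: ((f \o shift x) (h *: 1) - f x)) @ 0^' --> df ->
  is_derive x 1 f df.
Proof.
move=> H; apply: DeriveDef; first exact: cvgP H.
exact: cvg_lim H.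
Qed.

Lemma is_derive_cvgE {W : normedModType C} (f : C -> W) (df : W) (x : C) :
  is_derive x 1 f df ->
  (fun h => h^-1 *: ((f \o shift x) (h *: 1) - f x)) @ 0^' --> df.
Proof.
move=> [H1 H2]; rewrite -H2; exact: H1.
Qed.

Lemma is_derive_entry m n (f : C -> 'M[C]_(m, n)) (x : C) (D : 'M[C]_(m, n)) :
  is_derive x 1 f D -> forall i j, is_derive x 1 (fun z => f z i j) (D i j).
Proof.
move=> /is_derive_cvgE H i j; apply: is_derive_cvg.
have HH := @continuous_cvg _ _ _ _ _ _ (fun M : 'M[C]_(m, n) => M i j) D (@coord_continuous C m n i j D) H.
match goal with |- ?g @ _ --> _ => have E : g = ((fun M : 'M[C]_(m, n) => M i j) \o (fun h : C => h^-1 *: ((f \o shift x) (h *: 1) - f x))) end.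
  by apply: funext => h; rewrite /= !mxE.
by rewrite E; exact: HH.
Qed.


Lemma is_derive_mx m n (f : C -> 'M[C]_(m, n)) (x : C) (D : 'M[C]_(m, n)) :
  (forall i j, is_derive x 1 (fun z => f z i j) (D i j)) -> is_derive x 1 f D.
Proof.
move=> H; apply: is_derive_cvg; apply/cvg_ballP => e e0.
have H' : forall ij : 'I_m * 'I_n, \forall h \near 0^', 
   ball (D ij.1 ij.2) e ((fun h : C => h^-1 *: ((f \o shift x) (h *: 1) - f x)) h ij.1 ij.2).
  move=> [i j] /=; have := @is_derive_cvgE _ _ _ _ (H i j) => /cvg_ballP/(_ e e0).
  by apply: filterS => h; rewrite !mxE.
have := @filter_forall _ _ _ _ (dnbhs_filter _) H'; apply: filterS => h hh.
split => // i j; exact: (hh (i, j)).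
Qed.

End Calc.

Section Calc2.
Local Open Scope classical_set_scope.
Variable R : realType.
Local Notation C := (CC R).
Lemma is_derive_comp {W : normedModType C} (f : C -> C) (g : C -> W) (x df : C) (dg : W) :
  is_derive x 1 f df -> is_derive (f x) 1 g dg ->
  is_derive x 1 (fun z => g (f z)) (df *: dg).
Proof.
move=> [hf vf] [hg vg].
have df' := (derivable1_diffP f x).1 hf.
have dg' := (derivable1_diffP g (f x)).1 hg.
have dc : differentiable (g \o f) x.
  exact: (differentiable_comp df' dg').
have hc : derivable (g \o f) x 1 by apply/derivable1_diffP.
change (is_derive x 1 (g \o f) (df *: dg)).
apply: (DeriveDef hc).
rewrite (@deriveE _ _ _ (g \o f) x 1 dc) (diff_comp df' dg') /=.
rewrite -(@deriveE _ _ _ f x 1 df') vf.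
have -> : df = df *: (1 : C) by rewrite [_ *: _]mulr1.
rewrite linearZ /= -(@deriveE _ _ _ g (f x) 1 dg') vg.
by rewrite [df%:A]mulr1.
Qed.

Lemma is_derive_inv (x : C) : x != 0 -> is_derive x 1 (fun z : C => z^-1) (- x ^- 2).
Proof.
move=> x0.
have h1 := @derivableV _ _ id x 1 x0 (@derivable_id _ _ x 1).
apply: (DeriveDef h1).
rewrite (@deriveV _ _ id x 1 x0 (@derivable_id _ _ x 1)) derive_id.
by rewrite [_ *: _]mulr1.
Qed.

Lemma is_derive_mulmx p m n (A : 'M[C]_(p, m)) (f : C -> 'M[C]_(m, n)) (x : C) (df : 'M[C]_(m, n)) :
  is_derive x 1 f df -> is_derive x 1 (fun z => A *m f z) (A *m df).
Proof.
move=> H; apply: is_derive_mx => i j.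
have -> : (fun z => (A *m f z) i j) = \sum_(k < m) (fun z => A i k *: f z k j).
  by apply: funext => z; rewrite mxE fct_sumE.
rewrite mxE; apply: is_derive_sum => k.
by apply: is_deriveZ; apply: is_derive_entry.
Qed.

Lemma is_derive_scalef m n (s : C -> C) (f : C -> 'M[C]_(m, n)) (x ds : C) (df : 'M[C]_(m, n)) :
  is_derive x 1 s ds -> is_derive x 1 f df ->
  is_derive x 1 (fun z => s z *: f z) (ds *: f x + s x *: df).
Proof.
move=> Hs Hf; apply: is_derive_mx => i j.
have H := is_deriveM Hs (@is_derive_entry R _ _ _ _ _ Hf i j).
have -> : (fun z => (s z *: f z) i j) = (s * (fun z => f z i j)) by apply: funext => z; rewrite mxE.
apply: (is_derive_eq H).
rewrite !mxE addrC; congr (_ + _); exact: mulrC.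
Qed.
End Calc2.

Section Fin.
Local Open Scope classical_set_scope.
Variable R : realType.
Local Notation C := (CC R).

Lemma lin_id n (F1 F2 F3 L : 'M[C]_3) (X : 'M[C]_(3, n)) (z d : C) :
  ((- z ^- 2) *: (F1 *m X) + z^-1 *: (F1 *m (d *: (L *m X)))) + F2 *m (d *: (L *m X))
   + (1 *: (F3 *m X) + z *: (F3 *m (d *: (L *m X))))
  = ((- z ^- 2) *: F1 + F3 + d *: ((z^-1 *: F1 + F2 + z *: F3) *m L)) *m X.
Proof.
apply/matrixP => i j; rewrite !mxE !big_ord_recl !big_ord0 !mxE !big_ord_recl !big_ord0 !mxE.
ring.
Qed.

Lemma near_neq0 (xi : C) : xi != 0 -> \forall z \near xi, z != 0.
Proof.
move=> x0; apply/nbhs_ballP; exists `|xi|; first by rewrite /= normr_gt0.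
move=> z /= hz; apply/eqP => z0; move: hz; rewrite z0 /ball /= subr0 ltxx.
by [].
Qed.
End Fin.

Theorem mainTheorem7 (R : realType) (QU QV QW PU PV PW t5 t2 x : CC R) :
  (forall xi : CC R, xi != 0 -> \det (gauge xi) = 1) /\
  exists Lk : 'I_5 -> 'M[CC R]_3,
    forall (n : nat) (Psi : CC R -> 'M[CC R]_(3, n)),
      (forall lam : CC R, derivable Psi lam 1 /\
         derive1 Psi lam = Lmat QU QV QW PU PV PW t5 t2 x lam *m Psi lam) ->
      forall xi : CC R, xi != 0 ->
        let Phi := fun zeta : CC R => invmx (gauge zeta) *m Psi (zeta ^+ 3) in
        derivable Phi xi 1 /\ derive1 Phi xi = calL Lk xi *m Phi xi.
Proof.
split; first exact: det_gauge.
pose aa := 2 * t5 + QU / 4; pose bb := - QV; pose A0 := L0 QU QV QW PU PV PW t5 t2 x.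
exists (Lk R aa bb A0) => n Psi HPsi xi xi0 Phi.
have HL : forall lam : CC R, is_derive lam 1 Psi (Lmat QU QV QW PU PV PW t5 t2 x lam *m Psi lam).
  move=> lam; have [h1 h2] := HPsi lam.
  exact: (DeriveDef h1 (etrans (esym (derive1E Psi lam)) h2)).
have Hcube : is_derive xi 1 (fun z : CC R => z ^+ 3) (3 * xi ^+ 2).
  have hd : derivable (fun z : CC R => z ^+ 3) xi 1 by apply: exprn_derivable.
  apply: (DeriveDef hd).
  by rewrite exp_derive [_ *: 1]mulr1.
have HY := @is_derive_comp R _ _ _ _ _ _ Hcube (HL (xi ^+ 3)).
have H1 := @is_derive_scalef R _ _ _ _ _ _ _ (@is_derive_inv R _ xi0) (@is_derive_mulmx R _ _ _ (E1 R) _ _ _ HY).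
have H2 := @is_derive_mulmx R _ _ _ (E2 R) _ _ _ HY.
have H3 := @is_derive_scalef R _ _ _ _ _ _ _ (@is_derive_id _ _ xi 1) (@is_derive_mulmx R _ _ _ (E3 R) _ _ _ HY).
have H123 := is_deriveD (is_deriveD H1 H2) H3.
have H4 := @is_derive_mulmx R _ _ _ (Ci R) _ _ _ H123.
have H5 := is_deriveZ ((cc R)^-1) H4.
case: H5 => Hd Hv.
match type of Hd with derivable ?F _ _ =>
  have Hn : \forall z \near xi, F z = Phi z end.
  apply: filterS (@near_neq0 R xi xi0) => z z0 /=.
  rewrite /Phi invgauge // /Gi /Dn -scalemxAl -mulmxA.
  by rewrite !mulmxDl -!scalemxAl.
split; first exact: near_eq_derivable Hn Hd.
rewrite derive1E -(near_eq_derive _ Hn) Hv.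
rewrite /Phi invgauge // mulmxA calL_Gi -(@F6 R aa bb A0 xi xi0) -scalemxAl -mulmxA.
congr (_ *: (_ *m _)).
rewrite /Dp /Dn.
exact: lin_id.
Qed.
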